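(* Let $\mathcal{R}$ be a commutative ring with unity, $P$ a locally finite poset and $b$ an additive biderivation of $I(P,\mathcal{R})$. Let $x\le y$ and $u\le v$ in $P$. If at least one pair of elements among $\{x,y,u,v\}$ is not comparable, then $b(r_1e_{xy},r_2e_{uv})=0$ for all $r_1,r_2\in\mathcal{R}$.
   Context: $I(P,\mathcal{R})$ is the incidence algebra: functions $f:P\times P\to\mathcal{R}$ with $f(x,y)=0$ unless $x\le y$, with product $(fg)(x,y)=\sum_{x\le z\le y}f(x,z)g(z,y)$; $e_{xy}$ ($x\le y$) is the function equal to $1$ at $(x,y)$ and $0$ elsewhere. An additive biderivation is a map $b$ of two arguments, additive in each, with $b(\alpha\beta,\gamma)=\alpha b(\beta,\gamma)+b(\alpha,\gamma)\beta$ and $b(\alpha,\beta\gamma)=\beta b(\alpha,\gamma)+b(\alpha,\beta)\gamma$. *)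

(* Defs.v *)
From HB Require Import structures.
From mathcomp Require Import all_boot all_order all_algebra.
Set Implicit Arguments. Unset Strict Implicit. Unset Printing Implicit Defensive.
Import Order.TTheory GRing.Theory.

Record locfin (d : Order.disp_t) (P : porderType d) := LocFin {
  lf_itv : P -> P -> seq P;
  lf_uniq : forall x y, uniq (lf_itv x y);
  lf_mem : forall x y z, (z \in lf_itv x y) = (x <= z <= y)%O }.

Record incidence (d : Order.disp_t) (P : porderType d) (R : comPzRingType) :=
  Incidence {
    ifun :> P -> P -> R;
    ifunP : forall x y, ~~ (x <= y)%O -> ifun x y = 0%R }.

Section Ops.
Variables (d : Order.disp_t) (P : porderType d) (R : comPzRingType).
Variable L : locfin P.
Local Open Scope ring_scope.

Lemma iadd_subproof (f g : incidence P R) x y :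
  ~~ (x <= y)%O -> f x y + g x y = 0.
Proof. by move=> h; rewrite !ifunP // addr0. Qed.

Definition iadd (f g : incidence P R) : incidence P R :=
  Incidence (@iadd_subproof f g).

Lemma imul_subproof (f g : incidence P R) x y :
  ~~ (x <= y)%O -> \sum_(z <- lf_itv L x y) f x z * g z y = 0.
Proof.
move=> h; rewrite big_seq big1 // => z; rewrite lf_mem => /andP[h1 h2].
by case/negP: h; exact: (le_trans h1 h2).
Qed.

Definition imul (f g : incidence P R) : incidence P R :=
  Incidence (@imul_subproof f g).

Lemma ie_subproof (r : R) (x y : P) a c :
  ~~ (a <= c)%O -> (if [&& a == x, c == y & (x <= y)%O] then r else 0) = 0.
Proof.
move=> h; case: ifP => // /and3P[/eqP ax /eqP cy xy].
by move: h; rewrite ax cy xy.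
Qed.

(* ie r x y = r e_{xy} when x <= y (the value r at (x,y), 0 elsewhere) *)
Definition ie (r : R) (x y : P) : incidence P R :=
  Incidence (@ie_subproof r x y).

End Ops.

Arguments imul {d P R} L f g.
Arguments iadd {d P R} f g.
Arguments ie {d P R} r x y.

Section Bider.
Variables (d : Order.disp_t) (P : porderType d) (R : comPzRingType).
Variable L : locfin P.
Definition is_biderivation (b : incidence P R -> incidence P R -> incidence P R) :=
  [/\ (forall f g h, b (iadd f g) h = iadd (b f h) (b g h)),
      (forall f g h, b f (iadd g h) = iadd (b f g) (b f h)),
      (forall a be c, b (imul L a be) c = iadd (imul L a (b be c)) (imul L (b a c) be)) &
      (forall a be c, b a (imul L be c) = iadd (imul L be (b a c)) (imul L (b a be) c))].

End Bider.

(* Main.v *)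
Require Import Defs.
From HB Require Import structures.
From mathcomp Require Import all_boot all_order all_algebra.
From Stdlib Require Import FunctionalExtensionality ProofIrrelevance.
Import Order.TTheory GRing.Theory.
Local Open Scope ring_scope.

Section H.
Variables (R : comPzRingType) (d : Order.disp_t) (P : porderType d) (L : locfin P).

Lemma inc_ext (f g : incidence P R) : (forall a c, f a c = g a c) -> f = g.
Proof.
case: f g => f fP [g gP] /= H.
have E : f = g by apply: functional_extensionality => a; apply: functional_extensionality => c.
subst g; f_equal; apply: proof_irrelevance.
Qed.

Lemma mulL (r : R) p q (h : incidence P R) a c :
  imul L (ie r p q) h a c = if (a == p) && (p <= q)%O then r * h q c else 0.
Proof.
rewrite /=; case: (boolP ((a == p) && (p <= q)%O)) => [/andP[/eqP ap pq]|H].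
  have [qi|qni] := boolP (q \in lf_itv L a c).
    rewrite (bigD1_seq q) //= ?lf_uniq // ap !eqxx pq /= big1 ?addr0 // => z zq.
    by rewrite (negbTE zq) /= mul0r.
  rewrite big1_seq; last first.
    move=> z /= zi; case: ifP => [/and3P[_ /eqP zq _]|_]; last by rewrite mul0r.
    by subst z; rewrite zi in qni.
  rewrite ifunP ?mulr0 //; apply: contra qni => qc.
  by rewrite lf_mem ap pq qc.
rewrite big1 // => z _; case: ifP => [/and3P[ap _ pq]|_]; last by rewrite mul0r.
by rewrite ap pq in H.
Qed.

Lemma mulR (r : R) p q (h : incidence P R) a c :
  imul L h (ie r p q) a c = if (c == q) && (p <= q)%O then h a p * r else 0.
Proof.
rewrite /=; case: (boolP ((c == q) && (p <= q)%O)) => [/andP[/eqP cq pq]|H].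
  have [pi|pni] := boolP (p \in lf_itv L a c).
    rewrite (bigD1_seq p) //= ?lf_uniq // cq !eqxx ?pq /= big1 ?addr0 // => z zp.
    by rewrite (negbTE zp) mulr0.
  rewrite big1_seq; last first.
    move=> z /= zi; have [zp|zp] := eqVneq z p; last by rewrite /= mulr0.
    by subst z; rewrite zi in pni.
  rewrite ifunP ?mul0r //; apply: contra pni => ap.
  by rewrite lf_mem ap cq pq.
rewrite big1 // => z _; case: ifP => [|_]; last by rewrite mulr0.
by rewrite andbF.
Qed.

Lemma ieL (r : R) p q : (p <= q)%O -> ie r p q = imul L (ie 1 p p) (ie r p q).
Proof.
move=> pq; apply: inc_ext => a c; rewrite mulL lexx andbT /=.
have [ap|ap] := eqVneq a p; last by [].
by subst a; rewrite !eqxx mul1r.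
Qed.

Lemma ieR (r : R) p q : (p <= q)%O -> ie r p q = imul L (ie r p q) (ie 1 q q).
Proof.
move=> pq; apply: inc_ext => a c; rewrite mulR lexx andbT /=.
have [cq|cq] := eqVneq c q; rewrite ?andbF //.
by subst c; rewrite !eqxx mulr1.
Qed.

Variable b : incidence P R -> incidence P R -> incidence P R.
Hypothesis hb : is_biderivation L b.

Lemma iaddE (f g : incidence P R) a c : iadd f g a c = f a c + g a c.
Proof. by []. Qed.

Lemma dA (r : R) p q h a c : (p <= q)%O ->
  b (ie r p q) h a c = (if a == p then b (ie r p q) h p c else 0)
                      + (if c == q then b (ie 1 p p) h a p * r else 0).
Proof.
case: hb => _ _ h3 _ pq; rewrite {1}(ieL r p q pq) h3 iaddE.
by rewrite mulL mulR lexx pq !andbT mul1r.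
Qed.

Lemma dB (r : R) p q h a c : (p <= q)%O ->
  b (ie r p q) h a c = (if a == p then r * b (ie 1 q q) h q c else 0)
                      + (if c == q then b (ie r p q) h a q else 0).
Proof.
case: hb => _ _ h3 _ pq; rewrite {1}(ieR r p q pq) h3 iaddE.
by rewrite mulL mulR lexx pq !andbT mulr1.
Qed.

Lemma dC (s : R) p q h a c : (p <= q)%O ->
  b h (ie s p q) a c = (if a == p then b h (ie s p q) p c else 0)
                      + (if c == q then b h (ie 1 p p) a p * s else 0).
Proof.
case: hb => _ _ _ h4 pq; rewrite {1}(ieL s p q pq) h4 iaddE.
by rewrite mulL mulR lexx pq !andbT mul1r.
Qed.

Lemma dD (s : R) p q h a c : (p <= q)%O ->
  b h (ie s p q) a c = (if a == p then s * b h (ie 1 q q) q c else 0)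
                      + (if c == q then b h (ie s p q) a q else 0).
Proof.
case: hb => _ _ _ h4 pq; rewrite {1}(ieR s p q pq) h4 iaddE.
by rewrite mulL mulR lexx pq !andbT mulr1.
Qed.
End H.
Arguments dA {R d P L b} hb r p q h a c _.
Arguments dB {R d P L b} hb r p q h a c _.
Arguments dC {R d P L b} hb s p q h a c _.
Arguments dD {R d P L b} hb s p q h a c _.

Theorem mainTheorem9 (R : comPzRingType) (d : Order.disp_t) (P : porderType d)
  (L : locfin P) (b : incidence P R -> incidence P R -> incidence P R)
  (x y u v : P) :
  is_biderivation L b ->
  (x <= y)%O -> (u <= v)%O ->
  [|| ~~ (x >=< y)%O, ~~ (x >=< u)%O, ~~ (x >=< v)%O,
      ~~ (y >=< u)%O, ~~ (y >=< v)%O | ~~ (u >=< v)%O] ->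
  forall r1 r2 : R, forall a c : P, b (ie r1 x y) (ie r2 u v) a c = 0%R.
Proof.
move=> hb xy uv H r1 r2 a c.
rewrite /Order.comparable xy uv /= ?orbF in H.
have ll := @lexx _ P.
case/or4P: H => /norP[H1 H2].
- (* x u incomparable *)
  have xv : (x == v) = false.
    by apply/negbTE/eqP => E; subst v; rewrite uv in H2.
  have xu : (x == u) = false.
    by apply/negbTE/eqP => E; subst u; rewrite ll in H1.
  have E1 : b (ie 1 x x) (ie r2 u v) a x = 0.
    rewrite (dC hb r2 u v _ a x uv) xv.
    case: eqP => [E|_]; last by rewrite addr0.
    by subst a; rewrite ifunP ?H2 // addr0.
  have E2 : b (ie r1 x y) (ie r2 u v) x c = 0.
    rewrite (dC hb r2 u v _ x c uv) xu add0r.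
    by case: eqP => // _; rewrite ifunP ?H1 ?mul0r.
  by rewrite (dA hb r1 x y _ a c xy) E1 E2 mul0r !if_same addr0.
- (* x v incomparable *)
  have xv : (x == v) = false.
    by apply/negbTE/eqP => E; subst v; rewrite ll in H1.
  have xu : (x == u) = false.
    by apply/negbTE/eqP => E; subst u; rewrite uv in H1.
  have E1 : b (ie 1 x x) (ie r2 u v) a x = 0.
    rewrite (dD hb r2 u v _ a x uv) xv addr0.
    by case: eqP => // _; rewrite ifunP ?H2 ?mulr0.
  have E2 : b (ie r1 x y) (ie r2 u v) x c = 0.
    rewrite (dD hb r2 u v _ x c uv) xu add0r.
    by case: eqP => // _; rewrite ifunP ?H1.
  by rewrite (dA hb r1 x y _ a c xy) E1 E2 mul0r !if_same addr0.
- (* y u incomparable *)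
  have yu : (y == u) = false.
    by apply/negbTE/eqP => E; subst u; rewrite ll in H1.
  have yv : (y == v) = false.
    by apply/negbTE/eqP => E; subst v; rewrite uv in H2.
  have E1 : b (ie 1 y y) (ie r2 u v) y c = 0.
    rewrite (dC hb r2 u v _ y c uv) yu add0r.
    by case: eqP => // _; rewrite ifunP ?H1 ?mul0r.
  have E2 : b (ie r1 x y) (ie r2 u v) a y = 0.
    rewrite (dC hb r2 u v _ a y uv) yv addr0.
    by case: eqP => // _; rewrite ifunP ?H2.
  by rewrite (dB hb r1 x y _ a c xy) E1 E2 mulr0 !if_same addr0.
- (* y v incomparable; or u v *)
  rewrite ?uv in H2.
  have yu : (y == u) = false.
    by apply/negbTE/eqP => E; subst u; rewrite uv in H1.
  have yv : (y == v) = false.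
    by apply/negbTE/eqP => E; subst v; rewrite ll in H1.
  have E1 : b (ie 1 y y) (ie r2 u v) y c = 0.
    rewrite (dD hb r2 u v _ y c uv) yu add0r.
    by case: eqP => // _; rewrite ifunP ?H1.
  have E2 : b (ie r1 x y) (ie r2 u v) a y = 0.
    rewrite (dD hb r2 u v _ a y uv) yv addr0.
    by case: eqP => // _; rewrite ifunP ?H2 ?mulr0.
  by rewrite (dB hb r1 x y _ a c xy) E1 E2 mulr0 !if_same addr0.
Qed.
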